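(* Let $\Pi_q$ be a projective plane (not necessarily Desarguesian) of order $q\ge 2$. Let $c\ge 1$ be a real number and let $k$ be an integer such that \[ 2c\sqrt{(q+1)\ln (q+1)}+2\le k<\frac{q^{2}-1}{q+2}. \] Then a point set of size $k$ chosen uniformly at random among all $k$-subsets of the point set of $\Pi_q$ is a saturating set with probability greater than \[ 1-\frac{1}{(q+1)^{2c^{2}-2}}. \]
   Context: A point set $S\subset \Pi_q$ is saturating if every point of $\Pi_q\setminus S$ is collinear with two points of $S$. Here $\ln$ denotes the natural logarithm. *)

(* Defs.v *)
From mathcomp Require Import all_boot.
From Stdlib Require Import Reals.
Set Implicit Arguments. Unset Strict Implicit. Unset Printing Implicit Defensive.

Section ProjPlane.
Variables (P L : finType) (inc : P -> L -> bool).

Definition projective_plane : Prop :=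
  (forall x y : P, x != y -> exists! l : L, inc x l && inc y l) /\
  (forall l m : L, l != m -> exists! x : P, inc x l && inc x m) /\
  (exists a b c d : P,
     uniq [:: a; b; c; d] /\
     forall (l : L), ~~ [|| [&& inc a l, inc b l & inc c l],
                            [&& inc a l, inc b l & inc d l],
                            [&& inc a l, inc c l & inc d l]
                          | [&& inc b l, inc c l & inc d l]]).

Definition plane_order (q : nat) : Prop :=
  forall l : L, #|[set x : P | inc x l]| = q.+1.

Definition collinear (x y z : P) : bool :=
  [exists l : L, [&& inc x l, inc y l & inc z l]].

Definition saturating (S : {set P}) : bool :=
  [forall p, (p \notin S) ==>
     [exists x in S, exists y in S, (x != y) && collinear p x y]].
End ProjPlane.

(* Main.v *)
Require Import Defs.
From mathcomp Require Import all_boot.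
Set Implicit Arguments. Unset Strict Implicit. Unset Printing Implicit Defensive.

Section Comb.
Variables (P L : finType) (inc : P -> L -> bool).
Hypothesis hpp : projective_plane inc.
Variable q : nat.
Hypothesis hord : plane_order inc q.

Lemma line_ex x y : x != y -> exists l, inc x l && inc y l.
Proof. by case: hpp => H _ /H [l [Hl _]]; exists l. Qed.

Lemma line_uniq x y l m : x != y -> inc x l -> inc y l -> inc x m -> inc y m -> l = m.
Proof.
case: hpp => H _ xy xl yl xm ym; case: (H _ _ xy) => l0 [_ U].
have := U l; have := U m; rewrite xl yl xm ym => /(_ isT) <- /(_ isT) <-. by [].
Qed.

Lemma pt_uniq l m x y : l != m -> inc x l -> inc x m -> inc y l -> inc y m -> x = y.
Proof.
case: hpp => _ [H _] lm xl xm yl ym; case: (H _ _ lm) => x0 [_ U].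
have := U x; have := U y; rewrite xl yl xm ym => /(_ isT) <- /(_ isT) <-. by [].
Qed.

Lemma exists_off : exists (p : P) (l : L), ~~ inc p l.
Proof.
case: hpp => _ [_ [a [b [c [d [U H]]]]]].
have ab : a != b by move: U; rewrite /= !inE; case: (a == b).
case: (line_ex ab) => l /andP [al bl].
exists c, l; apply/negP => cl; move: (H l); rewrite al bl cl. by [].
Qed.

Variable l0 : L.
Definition hl (p x : P) : L := odflt l0 [pick l | inc p l && inc x l].

Lemma hlP p x : x != p -> inc p (hl p x) && inc x (hl p x).
Proof.
move=> xp; rewrite /hl; case: pickP => [l //|none].
have [|l Hl] := @line_ex p x; first by rewrite eq_sym.
by rewrite none in Hl.
Qed.

Lemma hl_eq p x l : x != p -> inc p l -> inc x l -> hl p x = l.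
Proof.
move=> xp pl xl; case/andP: (hlP xp) => ph xh.
by apply: (@line_uniq p x); rewrite // eq_sym.
Qed.

Definition Lp p := [set l | inc p l].

Lemma card_line_minus p l : inc p l -> #|[set x | inc x l & x != p]| = q.
Proof.
move=> pl; have := hord l; rewrite (cardsD1 p) inE pl add1n => [[<-]].
by apply: eq_card => x; rewrite !inE andbC.
Qed.

Lemma countN p : #|P| = (q * #|Lp p|).+1.
Proof.
rewrite -cardsT (cardsD1 p) inE add1n; congr S.
rewrite -sum1_card (partition_big (hl p) (fun l => l \in Lp p)); last first.
  by move=> x; rewrite !inE andbT => /hlP /andP [].
rewrite mulnC -sum_nat_const; apply: eq_bigr => l; rewrite inE => pl.
rewrite sum1dep_card -(card_line_minus pl); apply: eq_card => x; rewrite !inE andbT.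
apply/andP/andP => [[xp /eqP <-]|[xl xp]]; first by case/andP: (hlP xp).
by split => //; apply/eqP; apply: hl_eq.
Qed.

Lemma count_off p : ~~ inc p l0 -> #|Lp p| = q.+1.
Proof.
move=> pl; rewrite -(hord l0).
have -> : Lp p = hl p @: [set x | inc x l0].
  apply/setP => m; rewrite inE; apply/idP/imsetP => [pm|[x]]; last first.
    rewrite inE => xl ->; have xp : x != p by apply: contraNneq pl => <-.
    by case/andP: (hlP xp).
  have ml : m != l0 by apply: contraNneq pl => <-.
  case: hpp => _ [H _]; case: (H _ _ ml) => x [/andP [xm xl] _].
  have xp : x != p by apply: contraNneq pl => <-.
  by exists x; rewrite ?inE // (hl_eq xp pm xm).
apply: card_in_imset => x y; rewrite !inE => xl yl e.
have xp : x != p by apply: contraNneq pl => <-.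
have yp : y != p by apply: contraNneq pl => <-.
case/andP: (hlP xp) => ph xh; case/andP: (hlP yp) => _ yh.
apply: (@pt_uniq (hl p x) l0) => //; last by rewrite e.
by apply: contraNneq pl => <-.
Qed.


Variable k : nat.

Definition Bad p := [set S : {set P} | [&& #|S| == k, p \notin S &
   [forall x in S, forall y in S, (x != y) ==> ~~ collinear inc p x y]]].

Definition fS p (S : {set P}) : {ffun L -> P} :=
  [ffun l => if l \in hl p @: S then odflt p [pick x in S | inc x l] else p].

Definition Fl p (l : L) : pred P := [pred x | inc x l & x != p].

Lemma bad_nc p S x y : S \in Bad p -> x \in S -> y \in S -> x != y ->
  forall l, inc p l -> inc x l -> inc y l -> False.
Proof.
rewrite inE => /and3P [_ _ /forallP H] xS yS xy l pl xl yl.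
move: (H x); rewrite xS /= => /forallP /(_ y); rewrite yS xy /=.
by move/existsP; apply; exists l; rewrite pl xl yl.
Qed.

Lemma bad_np p S x : S \in Bad p -> x \in S -> x != p.
Proof. by rewrite inE => /and3P [_ pS _] xS; apply: contraNneq pS => <-. Qed.

Lemma fS_h p S x : S \in Bad p -> x \in S -> fS p S (hl p x) = x.
Proof.
move=> B xS; rewrite ffunE imset_f //=.
case/andP: (hlP (bad_np B xS)) => ph xh.
case: pickP => [y /andP [yS yh] /=|/(_ x)]; last by rewrite xS xh.
apply/eqP; apply/negPn/negP => yx.
by apply: (bad_nc B yS xS yx ph yh xh).
Qed.

Lemma fS_inj p : {in Bad p &, injective (fS p)}.
Proof.
have E : forall S, S \in Bad p ->
    S = [set x | (x != p) && [exists l, fS p S l == x]].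
  move=> S B; apply/setP => x; rewrite inE; apply/idP/andP => [xS|[xp /existsP [l /eqP]]].
    by split; [exact: bad_np B xS | apply/existsP; exists (hl p x); rewrite fS_h].
  rewrite ffunE; case: ifP => _; last by move=> e; move: xp; rewrite e eqxx.
  by case: pickP => [y /andP [yS _] /= <-|_ /= e] //; move: xp; rewrite e eqxx.
by move=> S1 S2 B1 B2 e; rewrite (E _ B1) (E _ B2) e.
Qed.

Lemma fS_fam p S : S \in Bad p -> fS p S \in pfamily p (hl p @: S) (Fl p).
Proof.
move=> B; apply/pfamilyP; split.
  apply/subsetP => l; rewrite inE ffunE; case: ifP => //; by rewrite eqxx.
move=> l /imsetP [x xS ->]; rewrite fS_h //= inE.
by case/andP: (hlP (bad_np B xS)) => _ ->; rewrite (bad_np B xS).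
Qed.

Lemma h_sub p S : S \in Bad p -> (hl p @: S \subset Lp p) && (#|hl p @: S| == k).
Proof.
move=> B; apply/andP; split.
  apply/subsetP => l /imsetP [x xS ->]; rewrite inE.
  by case/andP: (hlP (bad_np B xS)).
rewrite card_in_imset; first by move: B; rewrite inE => /and3P [].
move=> x y xS yS e; apply/eqP/negPn/negP => xy.
case/andP: (hlP (bad_np B xS)) => ph xh.
case/andP: (hlP (bad_np B yS)) => _; rewrite -e => yh.
exact: (bad_nc B xS yS xy ph xh yh).
Qed.

Lemma card_bigcup_le (I T : finType) (A : {pred I}) (G : I -> {set T}) :
  #|\bigcup_(i in A) G i| <= \sum_(i in A) #|G i|.
Proof.
elim/big_rec2: _ => [|i n U _ le]; first by rewrite cards0.
by apply: leq_trans (leq_card_setU _ _).1 _; rewrite leq_add2l.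
Qed.

Lemma foldr_const (s : seq L) (g : L -> nat) :
  (forall x, x \in s -> g x = q) -> foldr muln 1 (map g s) = q ^ size s.
Proof.
elim: s => //= a s IH H; rewrite expnS H ?inE ?eqxx // IH // => x xs.
by apply: H; rewrite inE xs orbT.
Qed.

Lemma bad_le p : #|Bad p| <= 'C(#|Lp p|, k) * q ^ k.
Proof.
pose Tk := [set T : {set L} | T \subset Lp p & #|T| == k].
pose U := \bigcup_(T in Tk) [set f | f \in pfamily p T (Fl p)].
rewrite -(card_in_imset (fS_inj (p := p))).
have sub : fS p @: Bad p \subset U.
  apply/subsetP => f /imsetP [S B ->]; apply/bigcupP; exists (hl p @: S).
    by rewrite inE; exact: h_sub.
  by rewrite inE; exact: fS_fam.
apply: leq_trans (subset_leq_card sub) _.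
apply: (leq_trans (card_bigcup_le _ _)).
rewrite -cards_draws -/Tk -sum_nat_const; apply: leq_sum => T.
rewrite inE => /andP [sT /eqP cT]; rewrite cardsE card_pfamily.
rewrite foldr_const ?size_map -?cardE ?cT // => l.
rewrite mem_enum => lT.
have pl : inc p l by move: (subsetP sT _ lT); rewrite inE.
rewrite -(card_line_minus pl); apply: eq_card => x; rewrite !inE.
by [].
Qed.


Lemma nonsat_sub :
  [set S : {set P} | (#|S| == k) && ~~ saturating inc S] \subset \bigcup_(p : P) Bad p.
Proof.
apply/subsetP => S; rewrite inE => /andP [cS /forallPn [p]].
rewrite negb_imply => /andP [pS /existsPn H].
apply/bigcupP; exists p => //; rewrite inE cS pS /=.
apply/forallP => x; apply/implyP => xS; apply/forallP => y; apply/implyP => yS.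
apply/implyP => xy; apply/negP => col.
move: (H x); rewrite xS /= => /existsPn /(_ y); rewrite yS xy /=.
by rewrite col.
Qed.

Lemma sat_bound (p0 : P) : ~~ inc p0 l0 -> 0 < q ->
  'C(#|P|, k) <= #|[set S : {set P} | (#|S| == k) && saturating inc S]|
                 + #|P| * ('C(q.+1, k) * q ^ k).
Proof.
move=> off qpos.
have Lc p : #|Lp p| = q.+1.
  apply/eqP; rewrite -(eqn_pmul2l qpos); apply/eqP.
  by have := countN p; rewrite (countN p0) (count_off off) => [[]].
rewrite -card_draws -(cardsID [set S : {set P} | saturating inc S]).
apply: leq_add; first by apply: subset_leq_card; apply/subsetP => S; rewrite !inE.
apply: (@leq_trans #|[set S : {set P} | (#|S| == k) && ~~ saturating inc S]|).
  by apply: subset_leq_card; apply/subsetP => S; rewrite !inE andbC.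
apply: leq_trans (subset_leq_card nonsat_sub) _.
apply: leq_trans (card_bigcup_le _ _) _.
rewrite -sum1_card big_distrl /=; apply: leq_sum => p _; rewrite mul1n.
by rewrite -(Lc p); apply: bad_le.
Qed.

End Comb.

Lemma sat_final (P L : finType) (inc : P -> L -> bool) (hpp : projective_plane inc)
  (q : nat) (hord : plane_order inc q) (k : nat) : 0 < q ->
  #|P| = (q * q.+1).+1 /\
  'C(#|P|, k) <= #|[set S : {set P} | (#|S| == k) && saturating inc S]|
                 + #|P| * ('C(q.+1, k) * q ^ k).
Proof.
move=> qpos; case: (exists_off hpp) => p0 [l0 off]; split.
  by rewrite (countN hpp hord l0 p0) (count_off hpp hord off).
exact: (sat_bound hpp hord k off qpos).
Qed.

From Stdlib Require Import Reals.
From Stdlib Require Import Lra Psatz.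

Section RealPart.
Local Open Scope R_scope.

Lemma key_ineq (q k c L : R) : 2 <= k -> k <= q -> 1 <= q -> 0 <= L -> 0 <= c ->
  4*c^2*((q+1)*L) <= (k-2)^2 ->
  2*c^2*L*(q*(q+1)+1) <= k + (q-1)*k*(k-1)/2.
Proof.
move=> h2 hkq hq hL hc H.
have P1 : (k-2)^2*(q*(q+1)+1) <= 2*(q+1)*(k + (q-1)*k*(k-1)/2).
  have : 0 <= (q-k)*(k-2)*(q+2) by apply: Rmult_le_pos; [apply: Rmult_le_pos|]; lra.
  nra.
have P2 : 4*c^2*((q+1)*L) * (q*(q+1)+1) <= (k-2)^2*(q*(q+1)+1).
  apply: Rmult_le_compat_r => //; nra.
nra.
Qed.

Lemma step_ineq (q j : R) : 1 <= q -> 0 <= j -> j <= q ->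
  (q+1-j)*q <= exp (-(1+j*(q-1))/(q*(q+1)+1)) * (q*(q+1)+1-j).
Proof.
move=> hq hj hjq.
set N := q*(q+1)+1. set t := 1 + j*(q-1).
have hN : 0 < N by rewrite /N; nra.
have ht : 0 <= t by rewrite /t; nra.
have hE := exp_ineq1_le (-t/N).
have : (1 + -t/N) * (N - j) <= exp (-t/N) * (N - j).
  apply: Rmult_le_compat_r => //; rewrite /N; nra.
have -> : (1 + -t/N) * (N-j) = N - j - t + t*j/N by field; lra.
have : 0 <= t*j/N by apply: Rmult_le_pos; [nra|apply: Rlt_le; apply: Rinv_0_lt_compat].
rewrite /t /N; nra.
Qed.

Definition Ar (q j : nat) := INR j + (INR q - 1) * INR j * (INR j - 1) / 2.
Definition Nr (q : nat) := INR q * (INR q + 1) + 1.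

Lemma prod_bound (q j : nat) : (1 <= q)%nat -> (j <= q.+1)%nat ->
  INR ((q.+1) ^_ j * expn q j)%nat <= exp (- Ar q j / Nr q) * INR ((q * q.+1).+1 ^_ j).
Proof.
move=> hq; elim: j => [|j IH] hj.
  have -> : Ar q 0 = 0 by rewrite /Ar /=; lra.
  rewrite Ropp_0 /Rdiv Rmult_0_l exp_0 /=; lra.
have hjq : (j <= q)%nat by [].
have IH' := IH (ltnW hj).
rewrite ffactnSr (ffactnSr (q * q.+1).+1) expnSr.
have e1 : INR (q.+1 - j) = INR q + 1 - INR j.
  by rewrite -minusE minus_INR ?S_INR //; apply/leP; apply: ltnW.
have e2 : INR ((q * q.+1).+1 - j) = Nr q - INR j.
  rewrite -minusE minus_INR ?S_INR -?multE ?mult_INR ?S_INR //.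
  apply/leP; apply: leq_trans (ltnW hj) _; by rewrite ltnS leq_pmulr.
have e3 : exp (- Ar q j.+1 / Nr q) =
    exp (- Ar q j / Nr q) * exp (-(1 + INR j * (INR q - 1)) / Nr q).
  rewrite -exp_plus; congr exp; rewrite /Ar S_INR /Nr; field.
  have : 0 <= INR q by apply: pos_INR. nra.
have hqr : 1 <= INR q by apply: (le_INR 1); apply/leP.
have hjr : INR j <= INR q by apply: le_INR; apply/leP.
have St := @step_ineq _ _ hqr (pos_INR j) hjr.
rewrite -!multE !mult_INR e1 e2 e3.
have -> : INR ((q.+1) ^_ j) * (INR q + 1 - INR j) * (INR (expn q j) * INR q) =
   (INR ((q.+1) ^_ j) * INR (expn q j)) * ((INR q + 1 - INR j) * INR q) by ring.
have -> : exp (- Ar q j / Nr q) * exp (- (1 + INR j * (INR q - 1)) / Nr q) *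
    (INR ((q * q.+1).+1 ^_ j) * (Nr q - INR j)) =
  (exp (- Ar q j / Nr q) * INR ((q * q.+1).+1 ^_ j)) *
  (exp (- (1 + INR j * (INR q - 1)) / Nr q) * (Nr q - INR j)) by ring.
rewrite -mult_INR multE.
apply: Rmult_le_compat => //; first exact: pos_INR.
have : INR j <= INR q by [].
nra.
Qed.

Lemma exp_le' x y : x <= y -> exp x <= exp y.
Proof. case/Rle_lt_or_eq_dec => [h|->]; [apply: Rlt_le; exact: exp_increasing|lra]. Qed.

Lemma final_real (N sat q k : nat) (c : R) :
  N = (q * q.+1).+1 ->
  ('C(N, k) <= sat + N * ('C(q.+1, k) * expn q k))%nat ->
  (2 <= q)%nat -> (1 <= c)%R ->
  (2 * c * sqrt (INR (q + 1) * ln (INR (q + 1))) + 2 <= INR k)%R ->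
  (INR k < (INR q ^ 2 - 1) / (INR q + 2))%R ->
  (INR sat / INR 'C(N, k) > 1 - 1 / Rpower (INR (q + 1)) (2 * c ^ 2 - 2))%R.
Proof.
move=> eN hsat hq hc hk1 hk2.
have eq1 : INR (q + 1) = INR q + 1 by rewrite -plusE plus_INR.
rewrite eq1 in hk1 *.
have hqr : 2 <= INR q by apply: (le_INR 2); apply/leP.
set L := ln (INR q + 1) in hk1 *.
have hL : 0 < L.
  by rewrite /L -ln_1; apply: ln_increasing; lra.
set s := sqrt ((INR q + 1) * L) in hk1 *.
have hs0 : 0 <= s by apply: sqrt_pos.
have hss : s * s = (INR q + 1) * L by apply: sqrt_sqrt; nra.
have hk2r : 2 <= INR k by nra.
have hkq : INR k < INR q.
  have : (INR q ^ 2 - 1) / (INR q + 2) < INR q.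
    rewrite /Rdiv; apply: (Rmult_lt_reg_r (INR q + 2)); first lra.
    rewrite Rmult_assoc Rinv_l; [nra|lra].
  lra.
have hkqn : (k < q)%nat by apply/ltP; apply: INR_lt.
have Hsq : 4 * c ^ 2 * ((INR q + 1) * L) <= (INR k - 2) ^ 2.
  rewrite -hss; have : 0 <= 2 * c * s by nra. nra.
have Key := @key_ineq (INR q) (INR k) c L hk2r (Rlt_le _ _ hkq) ltac:(lra) (Rlt_le _ _ hL) ltac:(lra) Hsq.
have Pb := @prod_bound q k (ltnW hq) (leq_trans (ltnW hkqn) (leqnSn _)).
have hNr : 0 < Nr q by rewrite /Nr; nra.
set E := exp (- Ar q k / Nr q).
have hE : E <= exp (- (2 * c ^ 2 * L)).
  apply: exp_le'.
  have h1 : 2*c^2*L <= Ar q k / Nr q.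
    apply: (Rmult_le_reg_r (Nr q)) => //; rewrite /Rdiv (Rmult_assoc (Ar q k)) Rinv_l; [move: Key; rewrite /Nr /Ar; lra|lra].
  have h2 : - Ar q k / Nr q = - (Ar q k / Nr q) by rewrite /Rdiv Ropp_mult_distr_l.
  rewrite h2; lra.
have eNr : INR N = Nr q by rewrite eN S_INR -multE mult_INR S_INR /Nr.
have kN : (k <= N)%nat.
  rewrite eN; apply: leq_trans (ltnW hkqn) _; apply: leq_trans (leqnSn _) _.
  by rewrite ltnS leq_pmulr.
have hT : 0 < INR 'C(N, k) by apply: lt_0_INR; apply/ltP; rewrite bin_gt0.
set Bp := INR ('C(q.+1, k) * expn q k).
have hfk : 0 < INR k`! by apply: lt_0_INR; apply/ltP; exact: fact_gt0.
have hBp : Bp <= E * INR 'C(N, k).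
  apply: (Rmult_le_reg_r (INR k`!)) => //.
  rewrite /Bp -mult_INR Rmult_assoc -mult_INR !multE mulnAC bin_ffact bin_ffact eN.
  exact: Pb.
have hS : INR 'C(N, k) - INR N * Bp <= INR sat.
  have h := hsat; move/leP: h => h; have := le_INR _ _ h; rewrite -plusE -multE plus_INR mult_INR multE /Bp.
  lra.
have hN : INR N < (INR q + 1) * (INR q + 1) by rewrite eNr /Nr; nra.
have eRp : 1 / Rpower (INR q + 1) (2 * c ^ 2 - 2) = exp (2 * L) * exp (- (2 * c ^ 2 * L)).
  rewrite /Rpower -/L -exp_plus /Rdiv Rmult_1_l -exp_Ropp; congr exp; ring.
have e2L : exp (2 * L) = (INR q + 1) * (INR q + 1).
  by rewrite (_ : 2 * L = L + L) ?exp_plus ?/L ?exp_ln; lra.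
have hx := exp_pos (- (2 * c ^ 2 * L)).
have hE0 : 0 <= E by apply: Rlt_le; apply: exp_pos.
have hBp0 : 0 <= Bp by apply: pos_INR.
have : INR N * E < exp (2 * L) * exp (- (2 * c ^ 2 * L)).
  rewrite e2L.
  have h1 : INR N * E <= INR N * exp (- (2 * c ^ 2 * L)).
    by apply: Rmult_le_compat_l => //; apply: pos_INR.
  have h2 : INR N * exp (- (2 * c ^ 2 * L)) < (INR q + 1) * (INR q + 1) * exp (- (2 * c ^ 2 * L)).
    by apply: Rmult_lt_compat_r.
  lra.
rewrite -eRp => H.
apply: Rlt_gt.
have : INR sat / INR 'C(N, k) >= 1 - INR N * E.
  apply: Rle_ge; rewrite /Rdiv; apply: (Rmult_le_reg_r (INR 'C(N, k))) => //.
  rewrite Rmult_assoc Rinv_l; last lra.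
  have : INR N * Bp <= INR N * (E * INR 'C(N, k)) by apply: Rmult_le_compat_l => //; apply: pos_INR.
  nra.
lra.
Qed.

End RealPart.

Theorem theorem2 (P L : finType) (inc : P -> L -> bool)
  (hpp : projective_plane inc) (q : nat) (hord : plane_order inc q)
  (hq : (2 <= q)%nat) (c : R) (hc : (1 <= c)%R) (k : nat)
  (hk1 : (2 * c * sqrt (INR (q + 1) * ln (INR (q + 1))) + 2 <= INR k)%R)
  (hk2 : (INR k < (INR q ^ 2 - 1) / (INR q + 2))%R) :
  (INR #|[set S : {set P} | (#|S| == k) && saturating inc S]|
     / INR 'C(#|P|, k)
   > 1 - 1 / Rpower (INR (q + 1)) (2 * c ^ 2 - 2))%R.
Proof.
case: (sat_final hpp hord k (ltnW hq)) => eN hb.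
exact: (final_real eN hb hq hc hk1 hk2).
Qed.
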